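(* Assume the standing setup and let $F$ be a facet of $\Delta$. Then for each $q$, $\overline H^q(\Delta)$ has a basis consisting of images of monomials in $K[\Delta]$ whose support is disjoint from $F$.
   Context: Standing setup. $k$ is a field, $d\ge 2$ is an integer, and $\Delta$ is a connected oriented simplicial $k$-homology manifold of dimension $d-1$ with vertex set $V=\{1,\dots,n\}$ (connected, links of nonempty faces $G$ have the $k$-homology of spheres of dimension $d-|G|-1$; facets carry compatible orientations giving signs $\epsilon_F\in\{\pm1\}$, all $1$ in characteristic $2$). Let $K=k(a_{i,j}:1\le i\le d,\ 1\le j\le n)$ with independent indeterminates, $K[\Delta]$ the Stanley–Reisner ring over $K$ in variables $x_1,\dots,x_n$, $\theta_i=\sum_ja_{i,j}x_j$, $H(\Delta)=K[\Delta]/(\theta_1,\dots,\theta_d)$, $\deg:H^d(\Delta)\to K$ the isomorphism with $\deg(x_G)=\epsilon_G/[G]$ for facets $G$ ($x_G=\prod_{j\in G}x_j$, $[G]$ the determinant of the $d\times d$ matrix $(a_{i,j_m})$ for $G=\{j_1<\dots<j_d\}$), and $\overline H(\Delta)$ the Gorenstein quotient of $H(\Delta)$ by the ideal of $y$ with $\deg(yz)=0$ for all $z$, with graded pieces $\overline H^q(\Delta)$. The support of a nonzero monomial $x_{j_1}^{b_1}\cdots x_{j_s}^{b_s}$ with all $b_m>0$ is the set $\{j_1,\dots,j_s\}$. *)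

(* Defs.v *)
From HB Require Import structures.
From mathcomp Require Import all_boot all_order all_algebra fraction.
From mathcomp Require Import mpoly.
Set Implicit Arguments. Unset Strict Implicit. Unset Printing Implicit Defensive.
Import Order.TTheory GRing.Theory Num.Theory.
Local Open Scope ring_scope.

Section Defs.
Variables (k : fieldType) (n : nat).

Definition pos (v : 'I_n) (A : {set 'I_n}) : nat := #|[set w in A | (val w < val v)%N]|.

Definition is_complex (D : {set {set 'I_n}}) : Prop :=
  (forall A B : {set 'I_n}, A \in D -> B \subset A -> B \in D) /\
  (forall v : 'I_n, [set v] \in D).

Definition is_facet (D : {set {set 'I_n}}) (F : {set 'I_n}) : Prop :=
  F \in D /\ (forall G, G \in D -> F \subset G -> G = F).

Definition link (D : {set {set 'I_n}}) (G : {set 'I_n}) : {set {set 'I_n}} :=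
  [set H in D | [disjoint H & G] && (H :|: G \in D)].

Definition connected_cx (D : {set {set 'I_n}}) : Prop :=
  forall u v : 'I_n, connect [rel x y | [set x; y] \in D] u v.

(* boundary map from faces of size j to faces of size j-1, as a square
   matrix indexed by all subsets of 'I_n (rows = source faces) *)
Definition Nsets := #|{set 'I_n}|.
Definition bnd (L : {set {set 'I_n}}) (j : nat) : 'M[k]_Nsets :=
  \matrix_(a, b)
    (let t := (enum_val a : {set 'I_n}) in let s := (enum_val b : {set 'I_n}) in
     if (t \in L) && (#|t| == j) then
       \sum_(v in t | s == t :\ v) (-1) ^+ (pos v t)
     else 0).

(* dimension of reduced simplicial homology H~_{j-1}(L; k) *)
Definition rbetti (L : {set {set 'I_n}}) (j : nat) : nat :=
  (#|[set t in L | #|t| == j]| - \rank (bnd L j) - \rank (bnd L j.+1))%N.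

(* connected k-homology manifold of dimension d-1 *)
Definition homology_manifold (d : nat) (D : {set {set 'I_n}}) : Prop :=
  [/\ is_complex D,
      (exists2 G, G \in D & #|G| = d),
      (forall G, G \in D -> #|G| <= d)%N,
      connected_cx D &
      (forall G, G \in D -> G != set0 ->
        forall j, rbetti (link D G) j = (j == d - #|G|)%N)].

(* signs eps (true = -1) form an orientation: sum_F eps_F [F] is a cycle *)
Definition orientation (d : nat) (D : {set {set 'I_n}}) (eps : {set 'I_n} -> bool)
  : Prop :=
  forall R : {set 'I_n}, #|R| = d.-1 ->
    \sum_(u : 'I_n | (u \notin R) && (u |: R \in D))
        ((-1) ^+ (eps (u |: R) + pos u (u |: R)) : k) = 0.

Variable d : nat.
Definition Kf := {fraction {mpoly k[d * n]}}.
Definition a_ (i : 'I_d) (j : 'I_n) : Kf := FracField.tofrac ('X_(mxvec_index i j) : {mpoly k[d * n]}).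

Definition bracket (G : {set 'I_n}) : Kf :=
  \det (\matrix_(i < d, m < d) \sum_(j in G | pos j G == m) a_ i j).

Definition theta (i : 'I_d) : {mpoly Kf[n]} := \sum_(j < n) a_ i j *: 'X_j.

Definition xG (G : {set 'I_n}) : {mpoly Kf[n]} := \prod_(j in G) 'X_j.

Definition msupport (m : 'X_{1..n}) : {set 'I_n} := [set j | (m j != 0)%N].

Definition in_SR_ideal (D : {set {set 'I_n}}) (p : {mpoly Kf[n]}) : Prop :=
  forall m, m \in msupp p -> msupport m \notin D.

Definition in_J (D : {set {set 'I_n}}) (p : {mpoly Kf[n]}) : Prop :=
  exists (c : 'I_d -> {mpoly Kf[n]}) (r : {mpoly Kf[n]}),
    in_SR_ideal D r /\ p = \sum_(i < d) c i * theta i + r.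

Definition homog_of (q : nat) (p : {mpoly Kf[n]}) : Prop :=
  forall m, m \in msupp p -> mdeg m = q.

(* deg : H(D) -> K, extended by 0 outside degree d; the properties
   characterise the map deg : H^d(D) -> K of the paper *)
Definition is_deg (D : {set {set 'I_n}}) (eps : {set 'I_n} -> bool)
  (deg : {mpoly Kf[n]} -> Kf) : Prop :=
  [/\ (forall (c : Kf) p q, deg (c *: p + q) = c * deg p + deg q),
      (forall m : 'X_{1..n}, mdeg m != d -> deg 'X_[m] = 0),
      (forall p, in_J D p -> deg p = 0),
      (forall p, homog_of d p -> deg p = 0 -> in_J D p) &
      (forall G, is_facet D G -> deg (xG G) = (-1) ^+ eps G / bracket G)].

(* y maps to 0 in the Gorenstein quotient Hbar(D) *)
Definition gor_zero (deg : {mpoly Kf[n]} -> Kf) (y : {mpoly Kf[n]}) : Prop :=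
  forall z, deg (y * z) = 0.

End Defs.

(* Main.v *)
Require Import Defs.
From HB Require Import structures.
From mathcomp Require Import all_boot all_order all_algebra fraction.
From mathcomp Require Import mpoly.
From Stdlib Require Import Classical.
Import GRing.Theory.
Local Open Scope ring_scope.
Section Greedy.
Variables (K : fieldType) (V : lmodType K) (T : eqType) (f : T -> V) (Z : V -> Prop).
Hypotheses (Z0 : Z 0) (ZD : forall x y, Z x -> Z y -> Z (x + y))
  (ZZ : forall (a : K) x, Z x -> Z (a *: x)).

Definition Sp (B : seq T) (p : V) := exists c : T -> K, Z (p - \sum_(m <- B) c m *: f m).

Lemma ZN x : Z x -> Z (- x).
Proof. by move=> h; rewrite -scaleN1r; apply: ZZ. Qed.

Lemma Sp_Z B p : Z p -> Sp B p.
Proof.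
move=> h; exists (fun _ => 0); rewrite big1 ?subr0 // => m _; exact: scale0r.
Qed.

Lemma Sp0 B : Sp B 0.
Proof. exact: Sp_Z. Qed.

Lemma Sp_add B p q : Sp B p -> Sp B q -> Sp B (p + q).
Proof.
move=> [c1 h1] [c2 h2]; exists (fun m => c1 m + c2 m).
have -> : p + q - \sum_(m <- B) (c1 m + c2 m) *: f m =
  (p - \sum_(m <- B) c1 m *: f m) + (q - \sum_(m <- B) c2 m *: f m).
  rewrite (eq_bigr (fun m => c1 m *: f m + c2 m *: f m)); last by move=> m _; rewrite scalerDl.
  rewrite big_split /=; rewrite opprD !addrA; congr (_ + _); rewrite -!addrA; congr (_ + _).
  by rewrite addrC.
exact: ZD.
Qed.

Lemma Sp_scale B a p : Sp B p -> Sp B (a *: p).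
Proof.
move=> [c h]; exists (fun m => a * c m).
have -> : a *: p - \sum_(m <- B) (a * c m) *: f m = a *: (p - \sum_(m <- B) c m *: f m).
  rewrite scalerBr scaler_sumr; congr (_ - _); by apply: eq_bigr => m _; rewrite scalerA.
exact: ZZ.
Qed.

Lemma Sp_sum B (I : eqType) (r : seq I) (P : I -> V) :
  (forall i, i \in r -> Sp B (P i)) -> Sp B (\sum_(i <- r) P i).
Proof.
elim: r => [|i r IH] h; first by rewrite big_nil; exact: Sp0.
rewrite big_cons; apply: Sp_add; first by apply: h; rewrite mem_head.
by apply: IH => j hj; apply: h; rewrite inE hj orbT.
Qed.

Lemma Sp_trans S B p : Sp S p -> (forall x, x \in S -> Sp B (f x)) -> Sp B p.
Proof.
move=> [c h] hS.
have -> : p = (p - \sum_(m <- S) c m *: f m) + \sum_(m <- S) c m *: f m by rewrite subrK.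
apply: Sp_add; first exact: Sp_Z.
by apply: Sp_sum => m hm; apply: Sp_scale; apply: hS.
Qed.

Lemma Sp_in B x : uniq B -> x \in B -> Sp B (f x).
Proof.
move=> uB xB; exists (fun m => if m == x then 1 else 0).
rewrite (eq_bigr (fun m => if m == x then f x else 0)); last first.
  by move=> m _; case: eqP => [->|_]; rewrite ?scale1r ?scale0r.
rewrite (big_rem x xB) /= eqxx big1_seq ?addr0 ?subrr //.
move=> y /andP [_ hy]; case: eqP hy => // ->; by rewrite mem_rem_uniqF.
Qed.

Lemma greedy (S : seq T) : exists B : seq T,
  [/\ uniq B, {subset B <= S},
      (forall c : T -> K, Z (\sum_(m <- B) c m *: f m) -> forall m, m \in B -> c m = 0) &
      (forall x, x \in S -> Sp B (f x))].
Proof.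
elim: S => [|x S [B [uB sB iB spB]]].
  by exists [::]; split => //.
case: (classic (Sp B (f x))) => hx.
  exists B; split => //; first by move=> m /sB h; rewrite inE h orbT.
  by move=> y; rewrite inE => /orP [/eqP -> | /spB].
have xB : x \notin B by apply/negP => xb; apply: hx; exact: Sp_in.
exists (x :: B); split.
- by rewrite /= xB uB.
- by move=> m; rewrite !inE => /orP [->|/sB ->]; rewrite ?orbT.
- move=> c; rewrite big_cons => hZ.
  have cx : c x = 0.
    apply/eqP/negPn/negP => cx; apply: hx.
    exists (fun m => - (c x)^-1 * c m).
    have -> : f x - \sum_(m <- B) (- (c x)^-1 * c m) *: f m =
       (c x)^-1 *: (c x *: f x + \sum_(m <- B) c m *: f m).
      rewrite scalerDr scalerA mulVf // scale1r scaler_sumr -sumrN.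
      congr (_ + _); apply: eq_bigr => m _; by rewrite scalerA mulNr scaleNr opprK.
    exact: ZZ.
  move: hZ; rewrite cx scale0r add0r => hZ m; rewrite inE => /orP [/eqP -> //|].
  exact: iB.
- have mon : forall p, Sp B p -> Sp (x :: B) p.
    move=> p [c h]; exists (fun m => if m == x then 0 else c m).
    rewrite big_cons eqxx scale0r add0r.
    rewrite (eq_big_seq (fun m => c m *: f m)) // => m hm.
    by case: eqP hm xB => [-> ->|].
  move=> y; rewrite inE => /orP [/eqP ->|/spB]; last exact: mon.
  apply: Sp_in; last exact: mem_head.
  by rewrite /= xB uB.
Qed.

End Greedy.

Lemma mxvec_index_inj (m n : nat) (i i' : 'I_m) (j j' : 'I_n) :
  mxvec_index i j = mxvec_index i' j' -> i = i' /\ j = j'.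
Proof.
rewrite /mxvec_index => /cast_ord_inj /enum_rank_inj [-> ->]; by split.
Qed.

Section Elim.
Variables (k : fieldType) (n d : nat) (F : {set 'I_n}) (hr : (#|F| <= d)%N).
Local Notation r := #|F|.
Local Notation K := (Kf k n d).
Local Notation w := (widen_ord hr).

Definition Mgen : 'M[K]_r := \matrix_(i, m) a_ k (w i) (enum_val m).

Lemma Mgen_unit : Mgen \in unitmx.
Proof.
rewrite unitmxE unitfE.
pose M0 : 'M[{mpoly k[d * n]}]_r :=
  \matrix_(i, m) 'X_(mxvec_index (w i) (enum_val m)).
have -> : Mgen = map_mx (@FracField.tofrac _) M0.
  by apply/matrixP => i m; rewrite !mxE.
rewrite det_map_mx tofrac_eq0.
pose v : 'I_(d * n) -> k := fun x =>
  if [exists m : 'I_r, x == mxvec_index (w m) (enum_val m)] then 1 else 0.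
apply/negP => /eqP h0.
have : meval v (\det M0) = 0 by rewrite h0 meval0.
rewrite -det_map_mx.
have -> : map_mx (meval v) M0 = 1%:M.
  apply/matrixP => i m; rewrite !mxE mevalXU /v.
  case: existsP => [[m' /eqP /mxvec_index_inj [h1 h2]]|hn].
    have e1 : i = m' by apply: val_inj; move: h1 => /(congr1 val).
    have e2 : m = m' by apply: enum_val_inj.
    by rewrite e1 e2 eqxx.
  case: eqP => // e; exfalso; apply: hn; exists i; by rewrite e.
by rewrite det1 => /eqP; rewrite oner_eq0.
Qed.

Lemma elim_var (j : 'I_n) : j \in F ->
  exists (b : 'I_r -> K) (c : 'I_n -> K),
    (forall v, v \in F -> c v = 0) /\
    'X_j = \sum_(i < r) b i *: theta k n (w i) + \sum_(v < n) c v *: 'X_v.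
Proof.
move=> jF.
pose N := invmx Mgen.
pose m0 := enum_rank_in jF j.
have hm0 : enum_val m0 = j by rewrite enum_rankK_in.
pose e v := \sum_(i < r) N m0 i * a_ k (w i) v.
have eF : forall v, v \in F -> e v = (v == j)%:R.
  move=> v vF; have hv : v = enum_val (enum_rank_in vF v) by rewrite enum_rankK_in.
  have := mulVmx Mgen_unit => /(congr1 (fun M : 'M[K]_r => M m0 (enum_rank_in vF v))).
  rewrite !mxE => h.
  rewrite /e; rewrite {1 2}hv; rewrite -hm0 (inj_eq enum_val_inj) eq_sym -h.
  by apply: eq_bigr => i _; rewrite mxE.
exists (fun i => N m0 i), (fun v => if v \in F then 0 else - e v); split.
  by move=> v ->.
have hth : \sum_(i < r) N m0 i *: theta k n (w i) = \sum_(v < n) e v *: 'X_v.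
  rewrite /theta.
  under eq_bigr do rewrite scaler_sumr.
  rewrite exchange_big /=; apply: eq_bigr => v _.
  rewrite /e scaler_suml; apply: eq_bigr => i _; by rewrite scalerA.
rewrite hth -big_split /=.
rewrite (bigD1 j) //= eF // eqxx scale1r jF scale0r addr0 big1 ?addr0 //.
move=> v vj; case: ifP => vF; first by rewrite eF // (negbTE vj) scale0r addr0.
by rewrite scaleNr addrN.
Qed.

End Elim.

Section Main.
Variables (k : fieldType) (d n : nat) (D : {set {set 'I_n}}) (eps : {set 'I_n} -> bool)
  (hD : homology_manifold k d D)
  (deg : {mpoly (Kf k n d)[n]} -> Kf k n d) (hdeg : is_deg D eps deg)
  (F : {set 'I_n}) (hF : is_facet D F).
Local Notation K := (Kf k n d).
Local Notation P := {mpoly K[n]}.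
Local Notation Z := (gor_zero deg).

Lemma degD p q : deg (p + q) = deg p + deg q.
Proof. by case: hdeg => h _ _ _ _; rewrite -(scale1r p) h mul1r scale1r. Qed.
Lemma deg0 : deg 0 = 0.
Proof. have h := degD 0 0; rewrite addr0 in h; apply: (addrI (deg 0)); by rewrite addr0 -h. Qed.
Lemma degZ c p : deg (c *: p) = c * deg p.
Proof. by case: hdeg => h _ _ _ _; rewrite -(addr0 (c *: p)) h deg0 addr0. Qed.
Lemma deg_sum (I : Type) (r : seq I) (G : I -> P) :
  deg (\sum_(i <- r) G i) = \sum_(i <- r) deg (G i).
Proof.
elim: r => [|i r IH]; first by rewrite !big_nil deg0.
by rewrite !big_cons degD IH.
Qed.
Lemma degJ p : in_J D p -> deg p = 0.
Proof. by case: hdeg => _ _ h _ _; apply: h. Qed.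

Lemma Z0 : Z 0.
Proof. by move=> z; rewrite mul0r deg0. Qed.
Lemma ZD x y : Z x -> Z y -> Z (x + y).
Proof. by move=> hx hy z; rewrite mulrDl degD hx hy addr0. Qed.
Lemma ZZ (a : K) x : Z x -> Z (a *: x).
Proof. by move=> hx z; rewrite -scalerAl degZ hx mulr0. Qed.

Lemma inSR0 : in_SR_ideal D (0 : P).
Proof. by move=> m; rewrite mcoeff_msupp mcoeff0 eqxx. Qed.

Lemma Z_theta (r : nat) (hr : (r <= d)%N) (b : 'I_r -> K) (Q : P) :
  Z ((\sum_(i < r) b i *: theta k n (widen_ord hr i)) * Q).
Proof.
move=> z; apply: degJ.
exists (fun i => \sum_(i' < r) (if widen_ord hr i' == i then b i' *: (Q * z) else 0)), 0.
split; first exact: inSR0.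
rewrite addr0.
under [RHS]eq_bigr do rewrite mulr_suml.
rewrite exchange_big /= mulr_suml mulr_suml; apply: eq_bigr => i' _.
rewrite (eq_bigr (fun i => if i == widen_ord hr i' then b i' *: (Q * z) * theta k n i else 0)); last first.
  by move=> i _; rewrite eq_sym; case: eqP => _; rewrite ?mul0r.
rewrite -big_mkcond /= big_pred1_eq.
rewrite -!scalerAl; congr (_ *: _); by rewrite [RHS]mulrC mulrA.
Qed.

Lemma Z_nonface (m : 'X_{1..n}) : msupport m \notin D -> Z 'X_[m].
Proof.
move=> hm z; rewrite (mpolyE z) mulr_sumr deg_sum big1_seq //= => m2 _.
rewrite -scalerAr -mpolyXD degZ degJ ?mulr0 //.
exists (fun _ => 0), 'X_[m + m2]; split; last first.
  by rewrite big1 ?add0r // => i _; rewrite mul0r.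
move=> m'; rewrite msuppX inE => /eqP ->; apply/negP => hin; move/negP: hm; apply.
case: hD => [[hc _] _ _ _ _]; apply: (hc _ _ hin).
apply/subsetP => j; rewrite !inE mnmDE; apply: contra; rewrite addn_eq0 => /andP [] //.
Qed.


Definition fX (m : 'X_{1..n}) : P := 'X_[m].
Definition SpP B p := Sp K _ _ fX Z B p.

Definition Pm (q : nat) (m : 'X_{1..n}) : bool :=
  [&& mdeg m == q, msupport m \in D & [disjoint msupport m & F]].
Definition Sq q : seq 'X_{1..n} :=
  [seq bmnm x | x <- enum {: 'X_{1..n < q.+1}} & Pm q (bmnm x)].

Lemma Sq_uniq q : uniq (Sq q).
Proof.
rewrite map_inj_uniq ?filter_uniq //; first by rewrite -enumT enum_uniq.
by move=> x y; exact: val_inj.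
Qed.

Lemma mem_Sq q m : (m \in Sq q) = Pm q m.
Proof.
apply/mapP/idP => [[x] | hm].
  by rewrite mem_filter => /andP [h _] ->.
have hb : (mdeg m < q.+1)%N by case/and3P: hm => /eqP -> _ _.
exists (BMultinom hb) => //; by rewrite mem_filter /= hm mem_enum.
Qed.

Definition wt (m : 'X_{1..n}) := (\sum_(j in F) m j)%N.

Lemma hr : (#|F| <= d)%N.
Proof. by case: hD => _ _ h _ _; apply: h; case: hF. Qed.

Lemma main_ind q t m : wt m = t -> mdeg m = q -> SpP (Sq q) 'X_[m].
Proof.
elim: t m => [|t IH] m hw hdm.
  case: (boolP (msupport m \in D)) => hmD; last first.
    by apply: Sp_Z; apply: Z_nonface.
  have : fX m = 'X_[m] by [].
  move=> <-; apply: Sp_in; first exact: Z0.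
    exact: Sq_uniq.
  rewrite mem_Sq /Pm hdm eqxx hmD /=.
  rewrite disjoint_subset; apply/subsetP => j; rewrite !inE => hj.
  apply/negP => jF; move: hj.
  move/eqP: hw; rewrite /wt sum_nat_eq0 => /forallP /(_ j); by rewrite jF /= => /eqP ->.
have [j /andP [jF hj]] : exists j, (j \in F) && (0 < m j)%N.
  apply: NNPP => hn.
  have : wt m = 0%N.
    rewrite /wt big1 // => i iF; apply/eqP; rewrite -leqn0 leqNgt; apply/negP => h.
    by apply: hn; exists i; rewrite iF h.
  by rewrite hw.
pose m' := (m - U_(j))%MM.
have hm : m = (m' + U_(j))%MM.
  apply/mnmP => i; rewrite mnmDE mnmBE mnm1E; case: eqP => [<-|_].
    by rewrite subnK.
  by rewrite subn0 addn0.
have wsplit : forall v, wt (m' + U_(v))%MM = (wt m' + (v \in F))%N.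
  move=> v; rewrite /wt; under eq_bigr do rewrite mnmDE mnm1E.
  rewrite big_split /=; congr (_ + _)%N.
  case: (boolP (v \in F)) => vF.
    rewrite (bigD1 v) //= eqxx big1 // => i /andP [_ /negbTE]; by rewrite eq_sym => ->.
  by rewrite big1 // => i iF; case: eqP iF vF => // -> ->.
have hwm' : wt m' = t.
  move: hw; rewrite hm wsplit jF addn1; by case.
have [b [c [hc hX]]] := @elim_var k n d F hr j jF.
rewrite hm mpolyXD hX mulrDr.
apply: (@Sp_add _ _ _ _ _ ZD).
  apply: Sp_Z; rewrite mulrC; exact: Z_theta.
rewrite mulr_sumr; apply: (@Sp_sum _ _ _ _ _ Z0 ZD) => v _.
rewrite -scalerAr -mpolyXD.
case: (boolP (v \in F)) => vF.
  by rewrite (hc v vF) scale0r; apply: Sp_Z; exact: Z0.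
apply: (@Sp_scale _ _ _ _ _ ZZ).
apply: IH; first by rewrite wsplit (negbTE vF) addn0.
by rewrite mdegD mdeg1 -hdm hm mdegD mdeg1.
Qed.


Lemma final q : exists B : seq 'X_{1..n},
    [/\ uniq B,
        (forall m, m \in B ->
           [/\ mdeg m = q, msupport m \in D & [disjoint msupport m & F]]),
        (forall c : 'X_{1..n} -> K,
           gor_zero deg (\sum_(m <- B) c m *: 'X_[m]) ->
           forall m, m \in B -> c m = 0) &
        (forall y : {mpoly K[n]}, homog_of q y ->
           exists c : 'X_{1..n} -> K,
             gor_zero deg (y - \sum_(m <- B) c m *: 'X_[m]))].
Proof.
have [B [uB sB iB spB]] := @greedy K _ _ fX Z Z0 ZZ (Sq q).
exists B; split => //.
- by move=> m /sB; rewrite mem_Sq => /and3P [/eqP -> -> ->].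
- move=> y hy.
  have : SpP B y.
    apply: (@Sp_trans K _ _ fX Z Z0 ZD ZZ (Sq q)) => //.
    rewrite (mpolyE y); apply: (@Sp_sum K _ _ fX Z Z0 ZD) => m hm.
    apply: (@Sp_scale K _ _ fX Z ZZ); apply: (main_ind q (wt m) m erefl); exact: hy.
  by [].
Qed.

End Main.

Theorem lemma4p8 (k : fieldType) (d n : nat) (hd : (2 <= d)%N)
  (D : {set {set 'I_n}}) (eps : {set 'I_n} -> bool)
  (hD : homology_manifold k d D) (heps : orientation k d D eps)
  (deg : {mpoly (Kf k n d)[n]} -> Kf k n d) (hdeg : is_deg D eps deg)
  (F : {set 'I_n}) (hF : is_facet D F) :
  forall q : nat,
  exists B : seq 'X_{1..n},
    [/\ uniq B,
        (forall m, m \in B ->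
           [/\ mdeg m = q, msupport m \in D & [disjoint msupport m & F]]),
        (forall c : 'X_{1..n} -> Kf k n d,
           gor_zero deg (\sum_(m <- B) c m *: 'X_[m]) ->
           forall m, m \in B -> c m = 0) &
        (forall y : {mpoly (Kf k n d)[n]}, homog_of q y ->
           exists c : 'X_{1..n} -> Kf k n d,
             gor_zero deg (y - \sum_(m <- B) c m *: 'X_[m]))].
Proof.
move=> q; exact: (@final k d n D eps hD deg hdeg F hF q).
Qed.
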